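(* Let $P\in\mathbb{R}^N$ and $\delta\in(0,1)$. For every $x\in\mathbb{R}^N$ there are open sets $U_x$, $W_x$ with $x\in\overline{U_x}\cap\overline{W_x}$ such that $S_1(x,y)+P\cdot(x-y)<1+|P|\,r_V(\delta,1)$ for all $y\in U_x$, and $S_1(y,x)+P\cdot(y-x)<1+|P|\,r_V(\delta,1)$ for all $y\in W_x$. Moreover each of the families $\{U_x\}_{x\in\mathbb{R}^N}$ and $\{W_x\}_{x\in\mathbb{R}^N}$ is an open covering of $\mathbb{R}^N$.
   Context: $V:\mathbb{R}^N\to\mathbb{R}^N$ is $\mathbb{Z}^N$-periodic and Lipschitz continuous with Lipschitz constant $L_V$; $r_V(\delta,1)=(1-\delta)/L_V$ (with $r_V=+\infty$ if $L_V=0$). $H(x,p)=|p|+p\cdot V(x)$, $Z(x)=\{p\mid H(x,p)\le1\}$, $\sigma(x,q)=\sup\{p\cdot q\mid p\in Z(x)\}\in[0,+\infty]$. For a Lipschitz curve $\xi:[0,T]\to\mathbb{R}^N$, $\ell_V(\xi)=\int_0^T\sigma(\xi(t),\dot\xi(t))\,dt$, and $S_1(x,y)=\inf\{\ell_V(\xi)\mid \xi$ Lipschitz curve joining $x$ to $y\}$. *)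

(* Defs.v *)
From HB Require Import structures.
From mathcomp Require Import all_boot all_order all_algebra.
From mathcomp Require Import all_classical all_reals all_analysis.
Set Implicit Arguments. Unset Strict Implicit. Unset Printing Implicit Defensive.
Import Order.TTheory GRing.Theory Num.Theory.
Import numFieldNormedType.Exports.
Local Open Scope classical_set_scope.
Local Open Scope ring_scope.

Section Defs.
Variables (R : realType) (N : nat).
Notation vec := 'rV[R]_N.

Definition dot (p q : vec) : R := \sum_(i < N) p 0 i * q 0 i.
Definition enorm (p : vec) : R := Num.sqrt (dot p p).

Definition Zperiodic (V : vec -> vec) : Prop :=
  forall (x : vec) (k : 'rV[int]_N), V (x + map_mx (fun z : int => z%:~R) k) = V x.

Definition lipschitz_with (V : vec -> vec) (L : R) : Prop :=
  0 <= L /\ forall x y : vec, enorm (V x - V y) <= L * enorm (x - y).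

Definition rV (L delta : R) : \bar R :=
  if L == 0 then +oo%E else ((1 - delta) / L)%:E.

Definition Ham (V : vec -> vec) (x p : vec) : R := enorm p + dot p (V x).

Definition Zset (V : vec -> vec) (x : vec) : set vec := [set p | Ham V x p <= 1].

Definition sigma (V : vec -> vec) (x q : vec) : \bar R :=
  ereal_sup [set (dot p q)%:E | p in Zset V x].

(* xi : [0,T] -> R^N is a Lipschitz curve joining x to y
   (xi is given as a total function; only its values on [0,T] matter) *)
Definition lip_curve (T : R) (xi : R -> vec) (x y : vec) : Prop :=
  0 <= T /\ xi 0 = x /\ xi T = y /\
  exists K : R, forall s t : R, s \in `[0, T] -> t \in `[0, T] ->
    enorm (xi s - xi t) <= K * `|s - t|.

Definition ellV (V : vec -> vec) (T : R) (xi : R -> vec) : \bar R :=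
  (\int[@lebesgue_measure R]_(t in `[0%R, T]%classic) sigma V (xi t) ('D_1 xi t))%E.

Definition S1 (V : vec -> vec) (x y : vec) : \bar R :=
  ereal_inf [set e | exists (T : R) (xi : R -> vec), lip_curve T xi x y /\ e = ellV V T xi].

End Defs.

(* Main.v *)
Require Import Defs.
From HB Require Import structures.
From mathcomp Require Import all_boot all_order all_algebra.
From mathcomp Require Import all_classical all_reals all_analysis.
From mathcomp Require Import lra ring.
Import Order.TTheory GRing.Theory Num.Theory.
Import numFieldNormedType.Exports.
Local Open Scope classical_set_scope.
Local Open Scope ring_scope.
Set Implicit Arguments. Unset Strict Implicit.

Section DotL.
Variables (R : realType) (N : nat).
Implicit Types p q w : 'rV[R]_N.

Lemma dotC p q : dot p q = dot q p.
Proof. by apply: eq_bigr => i _; rewrite mulrC. Qed.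
Lemma dotDl p q w : dot (p + q) w = dot p w + dot q w.
Proof. by rewrite /dot -big_split; apply: eq_bigr => i _; rewrite !mxE mulrDl. Qed.
Lemma dotZl (c : R) p w : dot (c *: p) w = c * dot p w.
Proof. by rewrite /dot mulr_sumr; apply: eq_bigr => i _; rewrite !mxE mulrA. Qed.
Lemma dotNl p w : dot (- p) w = - dot p w.
Proof. by rewrite -scaleN1r dotZl mulN1r. Qed.
Lemma dotBl p q w : dot (p - q) w = dot p w - dot q w.
Proof. by rewrite dotDl dotNl. Qed.
Lemma dotDr p q w : dot w (p + q) = dot w p + dot w q.
Proof. by rewrite !(dotC w) dotDl. Qed.
Lemma dotZr (c : R) p w : dot w (c *: p) = c * dot w p.
Proof. by rewrite !(dotC w) dotZl. Qed.
Lemma dotNr p w : dot w (- p) = - dot w p.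
Proof. by rewrite !(dotC w) dotNl. Qed.
Lemma dot_ge0 p : 0 <= dot p p.
Proof. by apply: sumr_ge0 => i _; rewrite -expr2 sqr_ge0. Qed.
Lemma dot_eq0 p : dot p p = 0 -> p = 0.
Proof.
move=> /eqP; rewrite psumr_eq0; last by move=> i _; rewrite -expr2 sqr_ge0.
move=> /allP H; apply/rowP => i; rewrite mxE.
by have /(_ (mem_index_enum i)) := H i; rewrite implyTb mulf_eq0 orbb => /eqP.
Qed.
Lemma enorm_ge0 p : 0 <= enorm p. Proof. exact: sqrtr_ge0. Qed.
Lemma enorm_sq p : enorm p ^+ 2 = dot p p.
Proof. by rewrite sqr_sqrtr // dot_ge0. Qed.
Lemma enorm0 : enorm (0 : 'rV[R]_N) = 0.
Proof. by rewrite /enorm /dot big1 ?sqrtr0 // => i _; rewrite mxE mul0r. Qed.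
Lemma enormZ (c : R) p : enorm (c *: p) = `|c| * enorm p.
Proof. by rewrite /enorm dotZl dotZr mulrA -expr2 sqrtrM ?sqr_ge0 // sqrtr_sqr. Qed.
Lemma enormN p : enorm (- p) = enorm p.
Proof. by rewrite -scaleN1r enormZ normrN1 mul1r. Qed.

Lemma dotBr p q w : dot w (p - q) = dot w p - dot w q.
Proof. by rewrite dotDr dotNr. Qed.

Lemma CS p q : dot p q <= enorm p * enorm q.
Proof.
have H := dot_ge0 (enorm q *: p - enorm p *: q).
rewrite dotBl !dotBr !dotZl !dotZr (dotC q p) -!enorm_sq in H.
have [p0|pn0] := eqVneq (enorm p) 0.
  have -> : p = 0 by apply: dot_eq0; rewrite -enorm_sq p0 expr0n.
  by rewrite /dot big1 ?enorm0 ?mul0r // => i _; rewrite mxE mul0r.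
have [q0|qn0] := eqVneq (enorm q) 0.
  have -> : q = 0 by apply: dot_eq0; rewrite -enorm_sq q0 expr0n.
  by rewrite /dot big1 ?enorm0 ?mulr0 // => i _; rewrite mxE mulr0.
have pp : 0 < enorm p by rewrite lt_def pn0 enorm_ge0.
have qp : 0 < enorm q by rewrite lt_def qn0 enorm_ge0.
have pq : 0 < enorm p * enorm q by rewrite mulr_gt0.
rewrite -(ler_pM2l pq); nra.
Qed.

Lemma enorm_triangle p q : enorm (p + q) <= enorm p + enorm q.
Proof.
have h1 := CS p q.
have h0 : 0 <= enorm p + enorm q by rewrite addr_ge0 ?enorm_ge0.
rewrite -(ler_pXn2r (_ : (0 < 2)%N)) ?nnegrE ?enorm_ge0 //.
rewrite enorm_sq dotDl !dotDr (dotC q p) sqrrD -!enorm_sq; lra.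
Qed.

Lemma entry_le (w : 'rV[R]_N) i : `|w 0 i| <= `|w|.
Proof.
rewrite [leRHS]/Num.Def.normr/= mx_normrE.
apply: le_trans; last exact: (le_bigmax _ _ (0, i)).
by [].
Qed.

Lemma enorm_le_mx (w : 'rV[R]_N) : enorm w <= N%:R * `|w|.
Proof.
rewrite -(ler_pXn2r (_ : (0 < 2)%N)) ?nnegrE ?enorm_ge0 ?mulr_ge0 //.
rewrite enorm_sq /dot.
apply: (@le_trans _ _ (\sum_(i < N) `|w|^+2)).
  apply: ler_sum => i _; rewrite -expr2 -real_normK ?num_real //.
  by rewrite lerXn2r ?nnegrE ?entry_le.
rewrite sumr_const card_ord exprMn -[X in X <= _]mulr_natl ler_wpM2r ?sqr_ge0 //.
case: N w => [|n] w; first by rewrite expr0n.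
by rewrite expr2 ler_peMr // ler1n.
Qed.
End DotL.
Lemma D_line (R : realType) (N : nat) (z0 d : 'rV[R]_N) (t : R) :
  'D_1 (fun s : R => (z0 + s *: d)%R) t = d.
Proof.
rewrite /derive; apply: cvg_lim; first exact: norm_hausdorff.
apply: cvg_near_cst.
near=> h.
have hn0 : h != 0 by near: h; exact: nbhs_dnbhs_neq.
rewrite /= /shift /=; apply/rowP => i; rewrite !mxE.
rewrite /GRing.scale /= mulr1; field.
Unshelve. all: by end_near. Qed.

Section Sig.
Variables (R : realType) (N : nat) (V : 'rV[R]_N -> 'rV[R]_N).
Local Open Scope ereal_scope.

Lemma sigma_ge0 z q : 0 <= sigma V z q.
Proof.
apply: le_ereal_sup_tmp; exists (dot 0%R q)%:E.
  exists 0%R => //; rewrite /Zset /Ham /= enorm0 /dot big1 ?add0r //= => i _.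
  by rewrite mxE mul0r.
by rewrite /dot big1 // => i _; rewrite mxE mul0r.
Qed.

Lemma sigma_le1 z q : (enorm (q - V z) <= 1)%R -> sigma V z q <= 1.
Proof.
move=> hq; apply: ge_ereal_sup => _ [p /= hp <-]; rewrite lee_fin.
have := CS p (q - V z); rewrite dotBr.
move: hp; rewrite /Zset /Ham /= => hp.
have := enorm_ge0 p.
have : (enorm p * enorm (q - V z) <= enorm p)%R by rewrite ler_piMr ?enorm_ge0.
lra.
Qed.
End Sig.

Section Int.
Variable (R : realType).
Local Open Scope ereal_scope.

Lemma int_le1 (T : R) (f : R -> \bar R) : (0 <= T)%R ->
  (forall t, t \in `[0%R, T] -> 0 <= f t <= 1) ->
  \int[@lebesgue_measure R]_(t in `[0%R, T]%classic) f t <= T%:E.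
Proof.
move=> T0 hf.
have -> : T%:E = \int[@lebesgue_measure R]_(t in `[0%R, T]%classic) (cst 1) t.
  rewrite integral_cst; last exact: measurable_itv.
  rewrite mul1e; have := lebesgue_measure_itv `[0%R, T]; rewrite /= lte_fin.
  case: ltgtP T0 => //= [_ _|<- _] hm; apply: esym; rewrite hm //.
  by rewrite oppr0 adde0.
have f0 : forall x, `[0%R, T]%classic x -> 0 <= f x.
  by move=> x xin; have /andP[] := hf x xin.
have c0 : forall x, `[0%R, T]%classic x -> 0 <= (cst 1 : R -> \bar R) x.
  by move=> x _.
rewrite (ge0_integralE (@lebesgue_measure R) f0) (ge0_integralE (@lebesgue_measure R) c0).
apply: ereal_sup_le => _ [h /= hh <-]; exists h => //= x.
apply: le_trans (hh x) _; rewrite /patch; case: ifP => // xin.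
by have /andP[] := hf x (set_mem xin).
Qed.
End Int.

Section Line.
Variables (R : realType) (N : nat) (V : 'rV[R]_N -> 'rV[R]_N).
Local Open Scope ereal_scope.

Lemma S1_line (z0 d : 'rV[R]_N) (T : R) : (0 <= T)%R ->
  (forall t : R, (0 <= t <= T)%R -> (enorm (d - V (z0 + t *: d)) <= 1)%R) ->
  S1 V z0 (z0 + T *: d) <= T%:E.
Proof.
move=> T0 hd.
have H : ellV V T (fun s : R => (z0 + s *: d)%R) <= T%:E; last first.
  apply: le_trans H; apply: ereal_inf_lbound.
  exists T, (fun s : R => (z0 + s *: d)%R); split => //.
  split => //; split; first by rewrite scale0r addr0.
  split => //; exists (enorm d) => s t _ _.
  rewrite opprD addrACA subrr add0r -scalerBl enormZ mulrC //.
apply: int_le1 => // t tin; rewrite D_line sigma_ge0 /=.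
apply: sigma_le1; apply: hd.
by move: tin; rewrite in_itv.
Qed.
End Line.

Section Key.
Variables (R : realType) (N : nat) (V : 'rV[R]_N -> 'rV[R]_N) (L : R).
Hypothesis hlip : lipschitz_with V L.
Variable P : 'rV[R]_N.

Definition MM (A : R) : R := 2 * (1 + (L + enorm P) * (A + 1)).

Lemma key (x z0 d : 'rV[R]_N) (T A : R) : 0 < T -> enorm (V x) <= A ->
  T * MM A < 1 -> enorm (d - V x) < 2^-1 ->
  (forall t, 0 <= t <= T -> enorm (z0 + t *: d - x) <= T * enorm d) ->
  (S1 V z0 (z0 + T *: d) + (dot P (- (T *: d)))%:E < 1%:E)%E.
Proof.
move=> T0 hA hT hb hpath.
have [L0 hL] := hlip.
set e := enorm d; set a := enorm (V x); set b := enorm (d - V x).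
set lp := enorm P.
have hb' : b < 2^-1 := hb.
have hA' : a <= A := hA.
have e0 : 0 <= e by exact: enorm_ge0.
have a0 : 0 <= a by exact: enorm_ge0.
have b0 : 0 <= b by exact: enorm_ge0.
have lp0 : 0 <= lp by exact: enorm_ge0.
have heab : e <= b + a.
  by rewrite /e -[d](subrK (V x)) enorm_triangle.
have hM : T * (L + lp) * (A + 1) <= 2^-1.
  have -> : T * (L + lp) * (A + 1) = (T * MM A - 2 * T) / 2 by rewrite /MM -/lp; field.
  lra.
have hLTe : L * T * e <= 2^-1.
  apply: le_trans hM.
  have h : L * e <= (L + lp) * (A + 1).
    apply: ler_pM => //; lra.
  have -> : L * T * e = T * (L * e) by ring.
  have -> : T * (L + lp) * (A + 1) = T * ((L + lp) * (A + 1)) by ring.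
  by rewrite ler_wpM2l // ltW.
have hS1 : (S1 V z0 (z0 + T *: d) <= T%:E)%E.
  apply: S1_line; first exact: ltW.
  move=> t ht.
  have h1 := hpath t ht.
  have := hL x (z0 + t *: d).
  rewrite -[x - _]opprB enormN => h2.
  have h3 : enorm (d - V (z0 + t *: d)) <= b + enorm (V x - V (z0 + t *: d)).
    have -> : d - V (z0 + t *: d) = (d - V x) + (V x - V (z0 + t *: d)).
      by rewrite addrA subrK.
    exact: enorm_triangle.
  have h4 : L * enorm (z0 + t *: d - x) <= L * (T * e) by rewrite ler_wpM2l.
  have h5 : L * (T * e) = L * T * e by ring.
  lra.
have hdot : dot P (- (T *: d)) <= T * (lp * e).
  rewrite dotNr dotZr -mulrN ler_wpM2l ?(ltW T0) //.
  by have := CS (- P) d; rewrite enormN dotNl.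
have hfin : T + T * (lp * e) < 1.
  have hX : T * (lp * e) <= T * (lp * (A + 1)).
    by rewrite ler_wpM2l ?(ltW T0) // ler_wpM2l //; lra.
  have hY : T * (lp * (A + 1)) <= T * ((L + lp) * (A + 1)).
    rewrite ler_wpM2l ?(ltW T0) // ler_wpM2r //; lra.
  have hMM : T * MM A = 2 * T + 2 * (T * ((L + lp) * (A + 1))) by rewrite /MM -/lp; ring.
  lra.
apply: (le_lt_trans (leeD hS1 (_ : (dot P (- (T *: d)))%:E <= (T * (lp * e))%:E)%E)).
  by rewrite lee_fin.
by rewrite -EFinD lte_fin.
Qed.
End Key.

Section Topo.
Variables (R : realType) (N : nat).

Lemma nbhs_enorm (c y : 'rV[R]_N) (r : R) : enorm (y - c) < r ->
  nbhs y [set z | enorm (z - c) < r].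
Proof.
move=> hy; rewrite -nbhs_nbhs_norm.
have ep : 0 < (r - enorm (y - c)) / (N%:R + 1).
  by rewrite divr_gt0 ?subr_gt0 // ltr_wpDl.
exists ((r - enorm (y - c)) / (N%:R + 1)) => // z /= hz.
have h1 : enorm (z - c) <= enorm (z - y) + enorm (y - c).
  by have := enorm_triangle (z - y) (y - c); rewrite addrA subrK.
have h2 := enorm_le_mx (z - y).
have h3 : `|z - y| = `|y - z| by rewrite -normrN opprB.
have hN : 0 < N%:R + 1 :> R by rewrite ltr_wpDl.
have h4 : (N%:R + 1) * `|y - z| < r - enorm (y - c).
  by rewrite -ltr_pdivlMl // mulrC.
have h5 : N%:R * `|y - z| <= (N%:R + 1) * `|y - z|.
  by rewrite ler_wpM2r // lerDl.
rewrite h3 in h2; lra.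
Qed.
End Topo.

Section Balls.
Variables (R : realType) (N : nat) (V : 'rV[R]_N -> 'rV[R]_N) (L : R).
Hypothesis hlip : lipschitz_with V L.
Variable P : 'rV[R]_N.

Lemma MM_ge2 A : 0 <= A -> 2 <= MM L P A.
Proof.
move=> A0; have [L0 _] := hlip; have := enorm_ge0 P.
rewrite /MM => hp.
have : 0 <= (L + enorm P) * (A + 1) by rewrite mulr_ge0 // ?addr_ge0.
lra.
Qed.

Lemma Uball x T A : enorm (V x) <= A -> 0 < T -> T * MM L P A < 1 ->
  forall y, enorm (y - (x + T *: V x)) < T / 2 ->
  (S1 V x y + (dot P (x - y))%:E < 1%:E)%E.
Proof.
move=> hA T0 hT y hy.
set d := T^-1 *: (y - x).
have Td : T *: d = y - x by rewrite /d scalerA divff ?scale1r // gt_eqF.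
have hy' : y = x + T *: d by rewrite Td addrC subrK.
have hd : enorm (d - V x) < 2^-1.
  have -> : d - V x = T^-1 *: (y - (x + T *: V x)).
    have Tn0 : T != 0 by rewrite gt_eqF.
    by apply/rowP => i; rewrite /d !mxE; field.
  rewrite enormZ gtr0_norm ?invr_gt0 // mulrC ltr_pdivrMr //.
  by move: hy; rewrite mulrC.
have := @key R N V L hlip P x x d T A T0 hA hT hd.
rewrite -hy' Td opprB; apply.
move=> t /andP[t0 tT]; rewrite addrC addKr enormZ ger0_norm //.
by rewrite ler_wpM2r // enorm_ge0.
Qed.

Lemma Wball x T A : enorm (V x) <= A -> 0 < T -> T * MM L P A < 1 ->
  forall y, enorm (y - (x - T *: V x)) < T / 2 ->
  (S1 V y x + (dot P (y - x))%:E < 1%:E)%E.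
Proof.
move=> hA T0 hT y hy.
set d := T^-1 *: (x - y).
have Td : T *: d = x - y by rewrite /d scalerA divff ?scale1r // gt_eqF.
have hx' : x = y + T *: d by rewrite Td addrC subrK.
have hd : enorm (d - V x) < 2^-1.
  have -> : d - V x = - (T^-1 *: (y - (x - T *: V x))).
    have Tn0 : T != 0 by rewrite gt_eqF.
    by apply/rowP => i; rewrite /d !mxE; field.
  rewrite enormN enormZ gtr0_norm ?invr_gt0 // mulrC ltr_pdivrMr //.
  by move: hy; rewrite mulrC.
have := @key R N V L hlip P x y d T A T0 hA hT hd.
rewrite -hx' Td opprB; apply.
move=> t /andP[t0 tT].
have -> : y + t *: d - x = (t - T) *: d.
  have Tn0 : T != 0 by rewrite gt_eqF.
  by apply/rowP => i; rewrite /d !mxE; field.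
rewrite enormZ ler_wpM2r ?enorm_ge0 // ler0_norm ?subr_le0 //; lra.
Qed.

End Balls.

Section Cover.
Variables (R : realType) (N : nat) (V : 'rV[R]_N -> 'rV[R]_N) (L : R).
Hypothesis hlip : lipschitz_with V L.
Variable P : 'rV[R]_N.

Lemma cover_aux (y : 'rV[R]_N) (u : R) :
  `|u| <= (2 * MM L P ((1 + L) * enorm (V y)))^-1 ->
  enorm (V (y + u *: V y)) <= (1 + L) * enorm (V y) /\
  enorm (V (y + u *: V y) - V y) <= 4^-1.
Proof.
have [L0 hL] := hlip.
set e := enorm (V y); set A := (1 + L) * e; set M := MM L P A => hu.
have e0 : 0 <= e by exact: enorm_ge0.
have A0 : 0 <= A by rewrite mulr_ge0 // addr_ge0.
have M2 : 2 <= M by exact: MM_ge2.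
have hs : (2 * M)^-1 * M = 2^-1 by field; lra.
have lp0 := enorm_ge0 P.
have hLe : L * e <= M / 2.
  rewrite /M /MM.
  have : L * e <= L * (A + 1).
    rewrite ler_wpM2l // /A; nra.
  have : L * (A + 1) <= (L + enorm P) * (A + 1) by rewrite ler_wpM2r; lra.
  lra.
have hdist : enorm (V (y + u *: V y) - V y) <= L * (`|u| * e).
  by have := hL (y + u *: V y) y; rewrite addrAC subrr add0r enormZ.
have hu0 : 0 <= `|u| by [].
have hsl : (2 * M)^-1 <= 4^-1.
  rewrite lef_pV2 ?posrE //; lra.
have h1 : L * (`|u| * e) <= 4^-1.
  have -> : L * (`|u| * e) = `|u| * (L * e) by ring.
  have : `|u| * (L * e) <= (2 * M)^-1 * (M / 2).
    apply: ler_pM => //; nra.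
  have -> : (2 * M)^-1 * (M / 2) = 4^-1 by field; lra.
  done.
split; last lra.
have h2 : enorm (V (y + u *: V y)) <= enorm (V (y + u *: V y) - V y) + e.
  by have := enorm_triangle (V (y + u *: V y) - V y) (V y); rewrite subrK.
have h3 : L * (`|u| * e) <= L * e.
  rewrite ler_wpM2l // ler_piMl //; lra.
rewrite /A; lra.
Qed.
End Cover.

Theorem lemma5p3 (R : realType) (N : nat) (V : 'rV[R]_N -> 'rV[R]_N) (L : R)
  (hper : Zperiodic V) (hlip : lipschitz_with V L)
  (P : 'rV[R]_N) (delta : R) (hdelta : 0 < delta < 1) :
  exists U W : 'rV[R]_N -> set 'rV[R]_N,
    (forall x : 'rV[R]_N,
      [/\ open (U x) /\ open (W x),
          closure (U x) x /\ closure (W x) x,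
          (forall y, U x y ->
             (S1 V x y + (dot P (x - y))%:E < 1%:E + (enorm P)%:E * rV L delta)%E)
        & (forall y, W x y ->
             (S1 V y x + (dot P (y - x))%:E < 1%:E + (enorm P)%:E * rV L delta)%E)])
    /\ \bigcup_x U x = [set: 'rV[R]_N] /\ \bigcup_x W x = [set: 'rV[R]_N].
Proof.
have [L0 hL] := hlip.
pose G := fun x y => (S1 V x y + (dot P (x - y))%:E < 1%:E)%E.
pose G' := fun x y => (S1 V y x + (dot P (y - x))%:E < 1%:E)%E.
have rhs : (1%:E <= 1%:E + (enorm P)%:E * rV L delta)%E.
  rewrite leeDl // mule_ge0 // ?lee_fin ?enorm_ge0 //.
  rewrite /rV; case: eqP => // _; rewrite lee_fin divr_ge0 //.
  by move: hdelta => /andP[_ /ltW]; rewrite subr_ge0.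
have gen : forall y, exists s, [/\ 0 < s, s * MM L P ((1 + L) * enorm (V y)) < 1,
    `|s| <= (2 * MM L P ((1 + L) * enorm (V y)))^-1 & `|- s| <= (2 * MM L P ((1 + L) * enorm (V y)))^-1].
  move=> y; set M := MM L P _.
  have M2 : 2 <= M by apply: (MM_ge2 hlip); rewrite mulr_ge0 ?enorm_ge0 // addr_ge0.
  have s0 : 0 < (2 * M)^-1 by rewrite invr_gt0; lra.
  exists (2 * M)^-1; rewrite normrN gtr0_norm //; split => //.
  have -> : (2 * M)^-1 * M = 2^-1 by field; lra.
  lra.
exists (fun x => interior (G x)), (fun x => interior (G' x)).
split; [move=> x; split|split].
- by split; exact: open_interior.
- set a := enorm (V x); set M := MM L P a.
  have a0 : 0 <= a by exact: enorm_ge0.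
  have M2 : 2 <= M by exact: MM_ge2.
  have key2 : forall B, nbhs x B -> exists T, [/\ 0 < T, T * M < 1,
      B (x + T *: V x) & B (x - T *: V x)].
    move=> B; rewrite -nbhs_nbhs_norm => -[e /= e0 hB].
    have v0 : 0 <= `|V x| by [].
    set Q := M + `|V x| / e.
    have ve0 : 0 <= `|V x| / e by rewrite divr_ge0 // ltW.
    have Q0 : 2 <= Q by rewrite /Q; lra.
    have hT : (2 * Q)^-1 * Q = 2^-1 by field; lra.
    have T0 : 0 < (2 * Q)^-1 by rewrite invr_gt0; lra.
    have hTM : (2 * Q)^-1 * M <= 2^-1.
      rewrite -hT ler_wpM2l ?(ltW T0) // /Q lerDl divr_ge0 // ltW //.
    have hTv : (2 * Q)^-1 * `|V x| < e.
      have : (2 * Q)^-1 * (`|V x| / e) <= 2^-1.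
        by rewrite -hT ler_wpM2l ?(ltW T0) // /Q lerDr; lra.
      have -> : (2 * Q)^-1 * (`|V x| / e) = ((2 * Q)^-1 * `|V x|) / e by rewrite mulrA.
      rewrite ler_pdivrMr // => h; lra.
    exists (2 * Q)^-1; split => //; first lra.
    + apply: hB; rewrite /ball_ /= opprD addrA subrr add0r normrN normrZ.
      by rewrite gtr0_norm.
    + apply: hB; rewrite /ball_ /= opprB addrC subrK normrZ.
      by rewrite gtr0_norm.
  split => B /key2 [T [T0 hTM hB1 hB2]].
  + exists (x + T *: V x); split => //.
    rewrite /interior /=.
    apply: filterS (nbhs_enorm (c := x + T *: V x) (r := T / 2) _).
      by move=> y; exact: (Uball hlip (lexx _) T0 hTM).
    by rewrite subrr enorm0 divr_gt0.
  + exists (x - T *: V x); split => //.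
    rewrite /interior /=.
    apply: filterS (nbhs_enorm (c := x - T *: V x) (r := T / 2) _).
      by move=> y; exact: (Wball hlip (lexx _) T0 hTM).
    by rewrite subrr enorm0 divr_gt0.
- by move=> y /nbhs_singleton hy; apply: lt_le_trans rhs.
- by move=> y /nbhs_singleton hy; apply: lt_le_trans rhs.
- apply/seteqP; split => // y _; have [s [s0 hsM hs1 hs2]] := gen y.
  have [hA hd] := cover_aux hlip hs2.
    set x := y + - s *: V y.
    exists x => //.
    apply: filterS (nbhs_enorm (c := x + s *: V x) (r := s / 2) _).
      by move=> z; exact: (Uball hlip hA s0 hsM).
    have -> : y - (x + s *: V x) = - (s *: (V x - V y)).
      by apply/rowP => i; rewrite /x !mxE; ring.
    rewrite enormN enormZ gtr0_norm //.
    have : s * enorm (V x - V y) <= s * 4^-1 by rewrite ler_wpM2l // ltW.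
    lra.
- apply/seteqP; split => // y _; have [s [s0 hsM hs1 hs2]] := gen y.
  have [hA hd] := cover_aux hlip hs1.
    set x := y + s *: V y.
    exists x => //.
    apply: filterS (nbhs_enorm (c := x - s *: V x) (r := s / 2) _).
      by move=> z; exact: (Wball hlip hA s0 hsM).
    have -> : y - (x - s *: V x) = s *: (V x - V y).
      by apply/rowP => i; rewrite /x !mxE; ring.
    rewrite enormZ gtr0_norm //.
    have : s * enorm (V x - V y) <= s * 4^-1 by rewrite ler_wpM2l // ltW.
    lra.
Qed.
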